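(* Let $T=(T_{ij})_{i,j\ge1}$ be the infinite lower triangular Toeplitz matrix with $T_{ij}=\frac1{i-j+1}$ for $i\ge j$ and $T_{ij}=0$ for $i<j$. Then $T$ is invertible in the group of lower triangular matrices, and, with $w=T^{-1}\bigl(\tfrac12,\tfrac13,\tfrac14,\dots,\tfrac1{n+1},\dots\bigr)^T$, the matrix product $$\bigl(1,\tfrac12,\tfrac13,\dots,\tfrac1n,\dots\bigr)\,T^{-1}\,\bigl(\tfrac12,\tfrac13,\tfrac14,\dots,\tfrac1{n+1},\dots\bigr)^T=\sum_{n\ge1}\frac{w_n}{n}$$ converges and equals the Euler–Mascheroni constant $\gamma=\lim_{n\to\infty}\bigl(\sum_{m=1}^n\frac1m-\ln n\bigr)$. *)

(* Defs.v *)
(* real analysis (ln, limits) needed. Indices are 0-based: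
   row/column i here corresponds to row/column i+1 in the paper. *)
From Stdlib Require Import Reals Arith.
Open Scope R_scope.

Definition Tmat (i j : nat) : R :=
  if (j <=? i)%nat then / INR (i - j + 1) else 0.

Definition lower_tri (A : nat -> nat -> R) : Prop :=
  forall i j : nat, (i < j)%nat -> A i j = 0.

(* Product of infinite matrices; when the left factor A is lower triangular
   this finite sum over j = 0..i is the full (row-finite) product. *)
Definition lt_mul (A B : nat -> nat -> R) (i k : nat) : R :=
  sum_f_R0 (fun j => A i j * B j k) i.

Definition delta (i k : nat) : R := if Nat.eqb i k then 1 else 0.

(* w = S (1/2, 1/3, ...)^T ; paper's w_{n+1} is w n here. *)
Definition wvec (S : nat -> nat -> R) (n : nat) : R :=
  sum_f_R0 (fun j => S n j / INR (j + 2)) n.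

Definition partial_series (S : nat -> nat -> R) (N : nat) : R :=
  sum_f_R0 (fun n => wvec S n / INR (n + 1)) N.

Definition gamma_seq (n : nat) : R :=
  sum_f_R0 (fun m => / INR (m + 1)) n - ln (INR (n + 1)).

(* Main.v *)
Require Import Defs.
From Stdlib Require Import Reals Arith Lia Lra.
From Coquelicot Require Import Coquelicot.
Open Scope R_scope.

Fixpoint fsum (f : nat -> R) (n : nat) : R :=
  match n with O => 0 | S m => fsum f m + f m end.

Lemma sum_fsum f n : sum_f_R0 f n = fsum f (S n).
Proof. induction n; simpl in *; [lra| rewrite IHn; reflexivity]. Qed.

Lemma fsum_ext f g n : (forall i, (i < n)%nat -> f i = g i) -> fsum f n = fsum g n.
Proof. induction n; intros H; simpl; [reflexivity|]. rewrite IHn by (intros; apply H; lia). rewrite H by lia; reflexivity. Qed.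

Lemma fsum_first f n : fsum f (S n) = f O + fsum (fun i => f (S i)) n.
Proof. induction n; simpl in *; [lra|]. rewrite IHn. simpl. lra. Qed.

Lemma fsum_split f k n : fsum f (k + n) = fsum f k + fsum (fun m => f (k + m)%nat) n.
Proof. induction n; simpl. rewrite Nat.add_0_r; lra. rewrite Nat.add_succ_r; simpl. rewrite IHn; lra. Qed.

Lemma fsum_rev f n : fsum f n = fsum (fun m => f (n - 1 - m)%nat) n.
Proof.
  induction n; [reflexivity|].
  change (fsum f (S n)) with (fsum f n + f n). rewrite fsum_first. rewrite IHn.
  replace (S n - 1 - 0)%nat with n by lia.
  rewrite (fsum_ext (fun i => f (S n - 1 - S i)%nat) (fun m => f (n - 1 - m)%nat)); [lra|].
  intros; f_equal; lia.
Qed.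

Lemma fsum_plus f g n : fsum (fun i => f i + g i) n = fsum f n + fsum g n.
Proof. induction n; simpl; lra. Qed.
Lemma fsum_scal c f n : fsum (fun i => c * f i) n = c * fsum f n.
Proof. induction n; simpl; [ring|rewrite IHn; ring]. Qed.
Lemma fsum_minus f g n : fsum (fun i => f i - g i) n = fsum f n - fsum g n.
Proof. induction n; simpl; lra. Qed.
Lemma fsum_zero f n : (forall i, (i < n)%nat -> f i = 0) -> fsum f n = 0.
Proof. intros H; rewrite (fsum_ext f (fun _ => 0)) by auto. clear H. induction n; simpl; lra. Qed.
Lemma fsum_le f g n : (forall i, (i < n)%nat -> f i <= g i) -> fsum f n <= fsum g n.
Proof. induction n; intros H; simpl; [lra|]. assert (fsum f n <= fsum g n) by (apply IHn; intros; apply H; lia). assert (f n <= g n) by (apply H; lia). lra. Qed.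

Lemma sum_from k i F : (k <= i)%nat -> (forall j, (j < k)%nat -> F j = 0) ->
  sum_f_R0 F i = fsum (fun m => F (k + m)%nat) (S (i - k)).
Proof.
  intros Hk H. rewrite sum_fsum. replace (S i) with (k + S (i - k))%nat by lia.
  rewrite fsum_split. rewrite (fsum_zero F k) by auto. lra.
Qed.

Fixpoint cc (n : nat) (t : R) : R :=
  match n with O => 1 | S m => cc m t * (INR m - t) / INR (S m) end.
Fixpoint dd (n : nat) (t : R) : R :=
  match n with O => 0 | S m => (dd m t * (INR m - t) - cc m t) / INR (S m) end.

Lemma INRS_pos m : 0 < INR (S m).
Proof. apply lt_0_INR; lia. Qed.

Lemma is_derive_eq (f : R -> R) x l l' : is_derive f x l -> l = l' -> is_derive f x l'.
Proof. intros H <-; exact H. Qed.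

Lemma cc_deriv n t : is_derive (cc n) t (dd n t).
Proof.
  induction n.
  - simpl. apply (is_derive_ext (fun _ => 1)); [reflexivity|]. auto_derive; auto.
  - assert (D2 : is_derive (fun t => INR n - t) t (-1)).
    { auto_derive; auto; ring. }
    pose proof (is_derive_mult (cc n) (fun t => INR n - t) t (dd n t) (-1) IHn D2 Rmult_comm) as H.
    pose proof (is_derive_scal _ t (/ INR (S n)) _ H) as H2.
    eapply is_derive_ext; [|eapply is_derive_eq; [exact H2|]].
    { intros u. simpl. unfold mult; simpl. field. apply Rgt_not_eq, INRS_pos. }
    simpl. unfold mult, plus; simpl. field. apply Rgt_not_eq, INRS_pos.
Qed.

Lemma cont_R (f : R -> R) x : continuity_pt f x -> continuous f x.
Proof. intros H. apply continuity_pt_filterlim; exact H. Qed.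

Lemma cc_cont n t : continuous (cc n) t.
Proof. exact (ex_derive_continuous (K:=R_AbsRing) (V:=R_NormedModule) (cc n) t (ex_intro _ _ (cc_deriv n t))). Qed.

Lemma dd_cont n t : continuous (dd n) t.
Proof.
  induction n.
  - simpl. apply (continuous_ext (fun _ => 0)); [reflexivity|]. apply continuous_const.
  - apply cont_R. apply continuity_pt_filterlim in IHn. pose proof (continuity_pt_filterlim (cc n) t) as [_ Hc].
    specialize (Hc (cc_cont n t)).
    simpl. unfold Rdiv. apply continuity_pt_mult; [|apply continuity_pt_const; intros ??; reflexivity].
    apply continuity_pt_minus; auto. apply continuity_pt_mult; auto.
    apply continuity_pt_minus. apply continuity_pt_const; intros ??; reflexivity. apply continuity_pt_id.
Qed.

Definition AA n t := sum_f_R0 (fun j => cc j t / INR (n - j + 1)) n.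

Lemma INR_ne0 k : (0 < k)%nat -> INR k <> 0.
Proof. intros; apply Rgt_not_eq, lt_0_INR; lia. Qed.

Lemma cc_Srel j t : INR (S j) * cc (S j) t = (INR j - t) * cc j t.
Proof. cbn [cc]. field. apply INR_ne0; lia. Qed.

Lemma AA_rec m t : INR (S (S m)) * AA (S m) t = (INR (S m) - t) * AA m t + cc (S m) t.
Proof.
  unfold AA. rewrite !sum_fsum.
  rewrite <- fsum_scal, <- fsum_scal.
  transitivity (fsum (fun j => cc j t) (S (S m)) + fsum (fun j => INR j * cc j t / INR (S m - j + 1)) (S (S m))).
  { rewrite <- fsum_plus. apply fsum_ext. intros j Hj.
    rewrite plus_INR, minus_INR by lia.
    replace (INR (S (S m))) with (INR (S m) + 1) by (rewrite (S_INR (S m)); ring).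
    simpl (INR 1). field. apply Rgt_not_eq. assert (INR j <= INR (S m)) by (apply le_INR; lia). lra. }
  rewrite (fsum_first (fun j => INR j * cc j t / INR (S m - j + 1))).
  change (fsum (fun j => cc j t) (S (S m))) with (fsum (fun j => cc j t) (S m) + cc (S m) t).
  rewrite (fsum_ext (fun i => INR (S i) * cc (S i) t / INR (S m - S i + 1)) (fun i => (INR i - t) * cc i t / INR (m - i + 1))).
  2:{ intros i Hi. replace (S m - S i + 1)%nat with (m - i + 1)%nat by lia. rewrite cc_Srel. reflexivity. }
  simpl (INR 0). rewrite Rmult_0_l, Rdiv_0_l, Rplus_0_l.
  enough (fsum (fun j => cc j t) (S m) + fsum (fun i => (INR i - t) * cc i t / INR (m - i + 1)) (S m) =
          fsum (fun i => (INR (S m) - t) * (cc i t / INR (m - i + 1))) (S m)) by lra.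
  rewrite <- fsum_plus. apply fsum_ext. intros i Hi.
  rewrite plus_INR, minus_INR by lia. rewrite (S_INR m). simpl (INR 1). field.
  apply Rgt_not_eq. assert (INR i <= INR m) by (apply le_INR; lia). lra.
Qed.

Lemma AA_dd n t : AA n t = - dd (S n) t.
Proof.
  induction n.
  - unfold AA. simpl. field.
  - assert (H := AA_rec n t). rewrite IHn in H.
    apply (Rmult_eq_reg_l (INR (S (S n)))); [|apply INR_ne0; lia].
    rewrite H. cbn [dd]. field. split; apply INR_ne0; lia.
Qed.

Definition ss n : R := RInt (cc n) 0 1.

Lemma ss_int n : is_RInt (cc n) 0 1 (ss n).
Proof. apply (RInt_correct (V:=R_CompleteNormedModule)), (ex_RInt_continuous (V:=R_CompleteNormedModule)). intros; apply cc_cont. Qed.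

Lemma is_RInt_val (f : R -> R) a b (l l' : R) : is_RInt f a b l -> l = l' -> is_RInt f a b l'.
Proof. intros H <-; exact H. Qed.

Lemma is_RInt_ext' (g f : R -> R) a b (l : R) : (forall x, f x = g x) -> is_RInt g a b l -> is_RInt f a b l.
Proof. intros E H. apply (is_RInt_ext (V:=R_NormedModule) g f a b l); [intros; symmetry; auto|exact H]. Qed.

Lemma is_RInt_fsum (F : nat -> R -> R) (v : nat -> R) a b n :
  (forall j, is_RInt (F j) a b (v j)) ->
  is_RInt (fun t => fsum (fun j => F j t) n) a b (fsum v n).
Proof.
  intros H. induction n.
  - simpl. eapply is_RInt_val; [apply (is_RInt_const (V:=R_NormedModule) a b 0)|].
    simpl. unfold scal; simpl. unfold mult; simpl. ring.
  - simpl. apply (is_RInt_plus (V:=R_NormedModule) _ _ _ _ _ _ IHn (H n)).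
Qed.

Lemma is_RInt_scal' (f : R -> R) a b k (l : R) : is_RInt f a b l -> is_RInt (fun t => k * f t) a b (k * l).
Proof. intros H. apply (is_RInt_scal (V:=R_NormedModule) _ _ _ k _ H). Qed.

Lemma is_RInt_uniq (f : R -> R) a b (l1 l2 : R) : is_RInt f a b l1 -> is_RInt f a b l2 -> l1 = l2.
Proof. intros H1 H2. apply (is_RInt_unique (V:=R_CompleteNormedModule)) in H1, H2. congruence. Qed.

Lemma cc_S_0 n : cc (S n) 0 = 0.
Proof. induction n. cbn [cc]. simpl. field. cbn [cc]. cbn [cc] in IHn. rewrite IHn. unfold Rdiv. ring. Qed.

Lemma cc_SS_1 n : cc (S (S n)) 1 = 0.
Proof. induction n. cbn [cc]. simpl. field. cbn [cc]. cbn [cc] in IHn. rewrite IHn. unfold Rdiv. ring. Qed.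

Lemma conv n : sum_f_R0 (fun j => ss j / INR (n - j + 1)) n = if Nat.eqb n 0 then 1 else 0.
Proof.
  assert (H1 : is_RInt (AA n) 0 1 (sum_f_R0 (fun j => ss j / INR (n - j + 1)) n)).
  { unfold AA. rewrite sum_fsum. apply (is_RInt_ext' (fun t => fsum (fun j => cc j t / INR (n - j + 1)) (S n))); [intros x; rewrite sum_fsum; reflexivity|].
    apply (is_RInt_fsum (fun j t => cc j t / INR (n - j + 1))). intros j.
    apply (is_RInt_ext' (fun t => / INR (n - j + 1) * cc j t)); [intros x; unfold Rdiv; ring|].
    eapply is_RInt_val; [apply is_RInt_scal', ss_int|]. apply Rmult_comm. }
  assert (H2 : is_RInt (AA n) 0 1 (- (cc (S n) 1 - cc (S n) 0))).
  { apply (is_RInt_ext' (fun t => - dd (S n) t)); [intros x; apply AA_dd|].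
    pose proof (is_RInt_derive (V:=R_CompleteNormedModule) (cc (S n)) (dd (S n)) 0 1 (fun x _ => cc_deriv (S n) x) (fun x _ => dd_cont (S n) x)) as H.
    apply (is_RInt_ext' (fun t => -1 * dd (S n) t)); [intros x; ring|].
    apply (is_RInt_scal' _ _ _ (-1)) in H. eapply is_RInt_val; [exact H|]. unfold minus, plus, opp; simpl. ring. }
  rewrite (is_RInt_uniq _ _ _ _ _ H1 H2). rewrite cc_S_0.
  destruct n. simpl. cbn [cc]. simpl. field. rewrite cc_SS_1. simpl. ring.
Qed.

Lemma div_le1 a b : 0 < b -> a <= b -> a / b <= 1.
Proof. intros. apply (Rmult_le_reg_r b); auto. unfold Rdiv. rewrite Rmult_assoc, Rinv_l by lra. lra. Qed.

Fixpoint q (n : nat) (t : R) : R :=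
  match n with O => 1 | S m => q m t * (1 - t / INR (S m)) end.
Definition b n t := t * q n t / INR (S n).

Lemma cc_b n t : cc (S n) t = - b n t.
Proof.
  unfold b. induction n.
  - cbn [cc q]. simpl. field.
  - cbn [cc q]. cbn [cc] in IHn. rewrite IHn. rewrite (S_INR (S n)). rewrite (S_INR n).
    field. split; apply Rgt_not_eq; pose proof (pos_INR n); lra.
Qed.

Lemma b_tel n t : b n t = q n t - q (S n) t.
Proof. unfold b. cbn [q]. field. apply INR_ne0; lia. Qed.

Lemma q_bounds n t : 0 <= t <= 1 -> 0 <= q n t <= 1.
Proof.
  intros Ht. induction n; cbn [q]; [lra|].
  assert (1 <= INR (S n)) by (apply (le_INR 1); lia).
  assert (0 <= t / INR (S n) <= 1).
  { split. apply Rdiv_le_0_compat; lra. apply div_le1; lra. }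
  split. apply Rmult_le_pos; lra.
  apply Rle_trans with (q n t * 1); [apply Rmult_le_compat_l; lra | lra].
Qed.

Lemma b_nonneg n t : 0 <= t <= 1 -> 0 <= b n t.
Proof. intros Ht. unfold b. pose proof (q_bounds n t Ht). pose proof (INRS_pos n).
  apply Rdiv_le_0_compat; [apply Rmult_le_pos|]; lra. Qed.

Lemma fsum_b n t : fsum (fun i => b i t) n = 1 - q n t.
Proof. induction n; cbn [fsum q]; [lra|]. rewrite IHn, b_tel. cbn [q]. ring. Qed.

Fixpoint PP (N K : nat) : R :=
  match N with O => 1 | S M => PP M K * INR (S M) / (INR (S M) + INR K) end.

Lemma PP_shift N K : (INR N + INR K + 1) * PP N (S K) = (INR K + 1) * PP N K.
Proof.
  induction N.
  - simpl. ring.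
  - cbn [PP]. rewrite !S_INR in *.
    assert (0 <= INR N) by apply pos_INR. assert (0 <= INR K) by apply pos_INR.
    apply (Rmult_eq_reg_l (INR N + 1 + INR K)); [|lra].
    transitivity ((INR N + 1) * ((INR N + INR K + 1) * PP N (S K))).
    { field. lra. }
    rewrite IHN. field. lra.
Qed.

Lemma PP_bounds N K : 0 <= PP N K <= 1.
Proof.
  induction N; cbn [PP]; [lra|].
  pose proof (INRS_pos N). pose proof (pos_INR K).
  assert (0 <= INR (S N) / (INR (S N) + INR K) <= 1).
  { split. apply Rdiv_le_0_compat; lra. apply div_le1; lra. }
  unfold Rdiv in *. rewrite Rmult_assoc. split. apply Rmult_le_pos; lra.
  apply Rle_trans with (PP N K * 1); [apply Rmult_le_compat_l; lra | lra].
Qed.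

Lemma PP_small N K : PP (S N) K <= / (INR K + 1).
Proof.
  induction N.
  - cbn [PP]. simpl. pose proof (pos_INR K). apply Req_le. field. lra.
  - change (PP (S (S N)) K) with (PP (S N) K * INR (S (S N)) / (INR (S (S N)) + INR K)).
    pose proof (PP_bounds (S N) K).
    pose proof (INRS_pos (S N)). pose proof (pos_INR K).
    assert (0 <= INR (S (S N)) / (INR (S (S N)) + INR K) <= 1).
    { split. apply Rdiv_le_0_compat; lra. apply div_le1; lra. }
    unfold Rdiv in *. rewrite Rmult_assoc.
    apply Rle_trans with (PP (S N) K * 1). apply Rmult_le_compat_l; lra. lra.
Qed.

Lemma PP_0 N : PP N 0 = 1.
Proof. induction N; cbn [PP]; [reflexivity|]. rewrite IHN. simpl (INR 0). rewrite Rplus_0_r. field. apply INR_ne0; lia. Qed.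

Definition E N K t := fsum (fun k => PP N (S k) / (INR (S k) * (INR (S k) + t))) K.
Definition sig N K := fsum (fun k => PP N (S k) / INR (S k)) K.
Definition h K t := fsum (fun k => t / (INR (S k) * (INR (S k) + t))) K.
Definition fN N t := fsum (fun n => b n t / INR (S n)) N.
Definition Y N K t := fsum (fun n => b n t * PP (S n) K / INR (S n)) N.

Lemma E_rec N K t : 0 <= t ->
  INR (S N) * E N K t - (INR (S N) - t) * E (S N) K t = sig (S N) K.
Proof.
  intros Ht. unfold E, sig. rewrite <- !fsum_scal, <- fsum_minus. apply fsum_ext. intros k _.
  cbn [PP]. pose proof (INRS_pos N). pose proof (INRS_pos k).
  rewrite (S_INR k), (S_INR N) in *. field. repeat split; lra.
Qed.

Lemma sig_val N K : sig (S N) K = (1 - PP (S N) K) / INR (S N).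
Proof.
  unfold sig. induction K.
  - cbn [fsum]. rewrite PP_0. unfold Rdiv. ring.
  - cbn [fsum]. rewrite IHK. pose proof (PP_shift (S N) K) as Hs.
    pose proof (INRS_pos N). pose proof (pos_INR K).
    rewrite (S_INR K). rewrite (S_INR N) in *.
    apply (Rmult_eq_reg_l (INR N + 1)); [|lra].
    transitivity (1 - PP (S N) K + (INR N + 1) * PP (S N) (S K) / (INR K + 1)).
    { field. lra. }
    transitivity (1 - PP (S N) (S K)); [|field; lra].
    replace (PP (S N) K) with ((INR N + 1 + INR K + 1) * PP (S N) (S K) / (INR K + 1)).
    field. lra. rewrite Hs. field. lra.
Qed.

Lemma main_id N K t : 0 <= t -> h K t - fN N t = t * q N t * E N K t - Y N K t.
Proof.
  intros Ht. induction N.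
  - unfold fN, Y, h, E. cbn [fsum q PP]. rewrite Rminus_0_r, Rmult_1_r, <- fsum_scal.
    rewrite Rminus_0_r. apply fsum_ext. intros; field.
    pose proof (INRS_pos i). split; lra.
  - unfold fN, Y in *. cbn [fsum]. 
    assert (H1 := E_rec N K t Ht). rewrite sig_val in H1.
    assert (Hq : q (S N) t = q N t * (INR (S N) - t) / INR (S N)).
    { cbn [q]. field. apply INR_ne0; lia. }
    enough (t * q N t * E N K t - b N t / INR (S N) =
            t * q (S N) t * E (S N) K t - b N t * PP (S N) K / INR (S N)) by lra.
    rewrite Hq. unfold b. pose proof (INRS_pos N).
    apply (Rplus_eq_reg_r 0).
    replace (t * q N t * E N K t - t * q N t / INR (S N) / INR (S N) + 0)
      with (t * q N t / INR (S N) * (INR (S N) * E N K t - 1 / INR (S N))) by (field; lra).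
    replace (t * (q N t * (INR (S N) - t) / INR (S N)) * E (S N) K t - t * q N t / INR (S N) * PP (S N) K / INR (S N) + 0)
      with (t * q N t / INR (S N) * ((INR (S N) - t) * E (S N) K t - PP (S N) K / INR (S N))) by (field; lra).
    f_equal. apply (Rplus_eq_reg_r (- ((INR (S N) - t) * E (S N) K t) + 1 / INR (S N))).
    replace (INR (S N) * E N K t - 1 / INR (S N) + (- ((INR (S N) - t) * E (S N) K t) + 1 / INR (S N)))
      with (INR (S N) * E N K t - (INR (S N) - t) * E (S N) K t) by ring.
    rewrite H1. field. lra.
Qed.

Lemma E_nonneg N K t : 0 <= t -> 0 <= E N K t.
Proof.
  intros Ht. unfold E. rewrite <- (fsum_zero (fun _ => 0) K) by auto. apply fsum_le. intros k _.
  pose proof (PP_bounds N (S k)). pose proof (INRS_pos k).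
  apply Rdiv_le_0_compat; [lra|]. apply Rmult_lt_0_compat; lra.
Qed.

Lemma E_le_sig N K t : 0 <= t -> E N K t <= sig N K.
Proof.
  intros Ht. unfold E, sig. apply fsum_le. intros k _.
  pose proof (PP_bounds N (S k)). pose proof (INRS_pos k). assert (1 <= INR (S k)) by (apply (le_INR 1); lia).
  unfold Rdiv. apply Rmult_le_compat_l; [lra|]. apply Rinv_le_contravar; [lra|].
  apply Rle_trans with (INR (S k) * 1); [lra|]. apply Rmult_le_compat_l; lra.
Qed.

Lemma Y_bounds N K t : 0 <= t <= 1 -> 0 <= Y N K t <= / (INR K + 1).
Proof.
  intros Ht. pose proof (pos_INR K). split.
  - unfold Y. rewrite <- (fsum_zero (fun _ => 0) N) by auto. apply fsum_le. intros n _.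
    pose proof (b_nonneg n t Ht). pose proof (PP_bounds (S n) K). pose proof (INRS_pos n).
    apply Rdiv_le_0_compat; [apply Rmult_le_pos|]; lra.
  - apply Rle_trans with (fsum (fun n => / (INR K + 1) * b n t) N).
    + unfold Y. apply fsum_le. intros n _.
      pose proof (b_nonneg n t Ht). pose proof (PP_small n K). pose proof (PP_bounds (S n) K).
      assert (1 <= INR (S n)) by (apply (le_INR 1); lia).
      unfold Rdiv. rewrite Rmult_assoc, Rmult_comm. apply Rmult_le_compat_r; [lra|].
      apply Rle_trans with (PP (S n) K * 1); [|lra]. apply Rmult_le_compat_l; [lra|].
      rewrite <- Rinv_1. apply Rinv_le_contravar; lra.
    + rewrite fsum_scal, fsum_b. pose proof (q_bounds N t Ht).
      assert (0 < / (INR K + 1)) by (apply Rinv_0_lt_compat; lra).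
      apply Rle_trans with (/ (INR K + 1) * 1); [apply Rmult_le_compat_l|]; lra.
Qed.

Lemma pt_bound N K t : 0 <= t <= 1 ->
  - / (INR K + 1) <= h K t - fN (S N) t <= / INR (S N).
Proof.
  intros Ht. rewrite main_id by lra.
  pose proof (Y_bounds (S N) K t Ht). pose proof (E_nonneg (S N) K t ltac:(lra)).
  pose proof (E_le_sig (S N) K t ltac:(lra)). rewrite sig_val in H1.
  pose proof (q_bounds (S N) t Ht). pose proof (PP_bounds (S N) K). pose proof (INRS_pos N).
  assert (0 <= t * q (S N) t <= 1).
  { split. apply Rmult_le_pos; lra. apply Rle_trans with (1 * 1); [apply Rmult_le_compat|]; lra. }
  assert (E (S N) K t <= / INR (S N)).
  { apply Rle_trans with (1 := H1). unfold Rdiv. rewrite <- (Rmult_1_l (/ INR (S N))) at 2. apply Rmult_le_compat_r.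
    apply Rlt_le, Rinv_0_lt_compat; lra. lra. }
  assert (0 <= t * q (S N) t * E (S N) K t <= / INR (S N)).
  { split. apply Rmult_le_pos; lra. apply Rle_trans with (1 * E (S N) K t); [apply Rmult_le_compat_r|]; lra. }
  lra.
Qed.

Lemma h_der c x : 0 < c -> 0 <= x -> is_derive (fun t => t / c - ln (c + t)) x (x / (c * (c + x))).
Proof. intros Hc Hx. auto_derive. lra. field. split; lra. Qed.

Lemma h_cont c x : 0 < c -> 0 <= x -> continuous (fun t => t / (c * (c + t))) x.
Proof. intros Hc Hx. apply (ex_derive_continuous (K:=R_AbsRing) (V:=R_NormedModule)). auto_derive. apply Rgt_not_eq, Rmult_lt_0_compat; lra. Qed.

Lemma h_term_int k : is_RInt (fun t => t / (INR (S k) * (INR (S k) + t))) 0 1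
   (/ INR (S k) - (ln (INR (S k) + 1) - ln (INR (S k)))).
Proof.
  pose proof (INRS_pos k) as Hk.
  assert (D : forall x, Rmin 0 1 <= x <= Rmax 0 1 ->
     is_derive (fun t => t / INR (S k) - ln (INR (S k) + t)) x (x / (INR (S k) * (INR (S k) + x)))).
  { intros x Hx. rewrite Rmin_left, Rmax_right in Hx by lra. apply h_der; lra. }
  assert (Cn : forall x, Rmin 0 1 <= x <= Rmax 0 1 -> continuous (fun t => t / (INR (S k) * (INR (S k) + t))) x).
  { intros x Hx. rewrite Rmin_left, Rmax_right in Hx by lra. apply h_cont; lra. }
  pose proof (is_RInt_derive (V:=R_CompleteNormedModule) _ _ 0 1 D Cn) as H.
  eapply is_RInt_val; [exact H|]. unfold minus, plus, opp; simpl.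
  rewrite Rplus_0_r. unfold Rdiv. ring.
Qed.

Definition Ih K := fsum (fun k => / INR (S k) - (ln (INR (S k) + 1) - ln (INR (S k)))) K.

Lemma h_int K : is_RInt (h K) 0 1 (Ih K).
Proof.
  unfold h, Ih. apply (is_RInt_fsum (fun k t => t / (INR (S k) * (INR (S k) + t)))).
  apply h_term_int.
Qed.

Lemma Ih_val K : Ih K = fsum (fun k => / INR (S k)) K - ln (INR K + 1).
Proof.
  unfold Ih. induction K.
  - simpl. rewrite Rplus_0_l, ln_1. ring.
  - cbn [fsum]. rewrite IHK. rewrite (S_INR K). ring.
Qed.

Lemma gamma_Ih K : gamma_seq K = Ih K + / INR (S K).
Proof.
  unfold gamma_seq. rewrite Ih_val, sum_fsum. cbn [fsum].
  rewrite (fsum_ext (fun m => / INR (m + 1)) (fun k => / INR (S k))) by (intros; f_equal; f_equal; lia).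
  replace (K + 1)%nat with (S K) by lia. rewrite (S_INR K). ring.
Qed.

Definition If N := fsum (fun n => - ss (S n) / INR (S n)) N.

Lemma f_int N : is_RInt (fN N) 0 1 (If N).
Proof.
  unfold fN, If. apply (is_RInt_fsum (fun n t => b n t / INR (S n))). intros n.
  apply (is_RInt_ext' (fun t => (- / INR (S n)) * cc (S n) t)).
  { intros x. rewrite cc_b. field. apply INR_ne0; lia. }
  eapply is_RInt_val; [apply is_RInt_scal', ss_int|]. field. apply INR_ne0; lia.
Qed.

Lemma int_bound (u : R -> R) a lo hi : is_RInt u 0 1 a -> (forall t, 0 <= t <= 1 -> lo <= u t <= hi) -> lo <= a <= hi.
Proof.
  intros Hu Hb.
  assert (Ea : ex_RInt u 0 1) by (exists a; exact Hu).
  assert (Hlo : is_RInt (fun _ => lo) 0 1 lo).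
  { eapply is_RInt_val; [apply (is_RInt_const (V:=R_NormedModule))|]. unfold scal; simpl; unfold mult; simpl. ring. }
  assert (Hhi : is_RInt (fun _ => hi) 0 1 hi).
  { eapply is_RInt_val; [apply (is_RInt_const (V:=R_NormedModule))|]. unfold scal; simpl; unfold mult; simpl. ring. }
  apply (is_RInt_unique (V:=R_CompleteNormedModule)) in Hu as Hu'.
  split.
  - rewrite <- Hu'. rewrite <- (is_RInt_unique (V:=R_CompleteNormedModule) _ _ _ _ Hlo).
    apply RInt_le; [lra| exists lo; exact Hlo | exact Ea|]. intros; apply Hb; lra.
  - rewrite <- Hu'. rewrite <- (is_RInt_unique (V:=R_CompleteNormedModule) _ _ _ _ Hhi).
    apply RInt_le; [lra| exact Ea | exists hi; exact Hhi|]. intros; apply Hb; lra.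
Qed.

Lemma key_bound N K : - / (INR K + 1) <= Ih K - If (S N) <= / INR (S N).
Proof.
  apply (int_bound (fun t => h K t - fN (S N) t)).
  - apply (is_RInt_minus (V:=R_NormedModule) _ _ _ _ _ _ (h_int K) (f_int (S N))).
  - intros t Ht. apply pt_bound; exact Ht.
Qed.

Lemma conv2 n : fsum (fun m => ss (n - m) / INR (m + 1)) (S n) = if Nat.eqb n 0 then 1 else 0.
Proof.
  rewrite <- conv, sum_fsum, (fsum_rev (fun j => ss j / INR (n - j + 1))).
  apply fsum_ext. intros m Hm. replace (S n - 1 - m)%nat with (n - m)%nat by lia.
  replace (n - (n - m) + 1)%nat with (m + 1)%nat by lia. reflexivity.
Qed.

Lemma lt_mul_T X i k : (k <= i)%nat ->
  lt_mul X Tmat i k = fsum (fun m => X i (k + m)%nat / INR (m + 1)) (S (i - k)).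
Proof.
  intros Hk. unfold lt_mul. rewrite (sum_from k i); auto.
  - apply fsum_ext. intros m _. unfold Tmat.
    replace (k <=? k + m)%nat with true by (symmetry; apply Nat.leb_le; lia).
    replace (k + m - k + 1)%nat with (m + 1)%nat by lia. reflexivity.
  - intros j Hj. unfold Tmat. replace (k <=? j)%nat with false by (symmetry; apply Nat.leb_gt; lia). ring.
Qed.

Lemma uniq X : (forall i k, lt_mul X Tmat i k = delta i k) -> forall n k, X (k + n)%nat k = ss n.
Proof.
  intros HX n. induction n as [n IH] using lt_wf_ind. intros k.
  pose proof (HX (k + n)%nat k) as H. rewrite lt_mul_T in H by lia.
  replace (k + n - k)%nat with n in H by lia.
  unfold delta in H. replace (Nat.eqb (k + n) k) with (Nat.eqb n 0) in H
    by (destruct n; symmetry; [apply Nat.eqb_eq|apply Nat.eqb_neq]; lia).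
  rewrite <- conv2 in H. rewrite !fsum_first in H.
  rewrite (fsum_ext (fun i => X (k + n)%nat (k + S i)%nat / INR (S i + 1)) (fun i => ss (n - S i) / INR (S i + 1))) in H.
  2:{ intros i Hi. f_equal. replace (k + n)%nat with ((k + S i) + (n - S i))%nat by lia. apply IH. lia. }
  rewrite Nat.add_0_r, Nat.sub_0_r in H. simpl (INR (0 + 1)) in H. lra.
Qed.

Definition S0 (i k : nat) : R := if (k <=? i)%nat then ss (i - k) else 0.

Lemma exists_inv : lower_tri S0 /\ (forall i k, lt_mul S0 Tmat i k = delta i k) /\
      (forall i k, lt_mul Tmat S0 i k = delta i k).
Proof.
  split; [|split].
  - intros i j Hij. unfold S0. replace (j <=? i)%nat with false by (symmetry; apply Nat.leb_gt; lia). reflexivity.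
  - intros i k. destruct (le_lt_dec k i) as [Hk|Hk].
    + rewrite lt_mul_T by lia. unfold delta.
      replace (Nat.eqb i k) with (Nat.eqb (i - k) 0)
        by (destruct (Nat.eqb_spec (i-k) 0); symmetry; [apply Nat.eqb_eq|apply Nat.eqb_neq]; lia).
      rewrite <- conv2. apply fsum_ext. intros m Hm. unfold S0.
      replace (k + m <=? i)%nat with true by (symmetry; apply Nat.leb_le; lia).
      f_equal. f_equal. lia.
    + unfold lt_mul, delta. replace (Nat.eqb i k) with false by (symmetry; apply Nat.eqb_neq; lia).
      rewrite sum_fsum. apply fsum_zero. intros j Hj. unfold Tmat.
      replace (k <=? j)%nat with false by (symmetry; apply Nat.leb_gt; lia). ring.
  - intros i k. destruct (le_lt_dec k i) as [Hk|Hk].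
    + unfold lt_mul. rewrite (sum_from k i); auto.
      2:{ intros j Hj. unfold S0. replace (k <=? j)%nat with false by (symmetry; apply Nat.leb_gt; lia). ring. }
      unfold delta.
      replace (Nat.eqb i k) with (Nat.eqb (i - k) 0)
        by (destruct (Nat.eqb_spec (i-k) 0); symmetry; [apply Nat.eqb_eq|apply Nat.eqb_neq]; lia).
      rewrite <- conv, sum_fsum. apply fsum_ext. intros m Hm. unfold S0, Tmat.
      replace (k <=? k + m)%nat with true by (symmetry; apply Nat.leb_le; lia).
      replace (k + m <=? i)%nat with true by (symmetry; apply Nat.leb_le; lia).
      replace (k + m - k)%nat with m by lia. replace (i - (k + m) + 1)%nat with (i - k - m + 1)%nat by lia.
      unfold Rdiv. ring.
    + unfold lt_mul, delta. replace (Nat.eqb i k) with false by (symmetry; apply Nat.eqb_neq; lia).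
      rewrite sum_fsum. apply fsum_zero. intros j Hj. unfold S0.
      replace (k <=? j)%nat with false by (symmetry; apply Nat.leb_gt; lia). ring.
Qed.

Lemma wvec_val X : lower_tri X -> (forall i k, lt_mul X Tmat i k = delta i k) ->
  forall n, wvec X n = - ss (S n).
Proof.
  intros HL HX n. pose proof (conv2 (S n)) as H. simpl (Nat.eqb (S n) 0) in H.
  rewrite fsum_first in H. unfold wvec. rewrite sum_fsum.
  rewrite (fsum_ext (fun j => X n j / INR (j + 2)) (fun m => ss (S n - S m) / INR (S m + 1))) in *.
  - rewrite Nat.sub_0_r in H. simpl (INR (0+1)) in H. lra.
  - intros j Hj. replace n with (j + (n - j))%nat at 1 by lia. rewrite (uniq X HX).
    replace (S n - S j)%nat with (n - j)%nat by lia. replace (S j + 1)%nat with (j + 2)%nat by lia. reflexivity.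
Qed.

Lemma ps_val X N : lower_tri X -> (forall i k, lt_mul X Tmat i k = delta i k) ->
  partial_series X N = If (S N).
Proof.
  intros HL HX. unfold partial_series, If. rewrite sum_fsum. apply fsum_ext. intros n _.
  rewrite (wvec_val X HL HX). replace (n + 1)%nat with (S n) by lia. reflexivity.
Qed.

Lemma small_inv e : 0 < e -> exists M, forall n, (M <= n)%nat -> / INR (S n) < e.
Proof.
  intros He. destruct (INR_archimed e 1 He) as [M HM]. exists M. intros n Hn.
  assert (INR M <= INR (S n)) by (apply le_INR; lia).
  pose proof (INRS_pos n).
  apply (Rmult_lt_reg_l (INR (S n))); auto. rewrite Rinv_r by lra.
  apply Rlt_le_trans with (INR M * e); [lra|]. apply Rmult_le_compat_r; lra.
Qed.

Lemma limit_arg (a g : nat -> R) :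
  (forall N K, Rabs (g K - a N) <= / INR (S N) + / INR (S K)) ->
  exists L, Un_cv g L /\ Un_cv a L.
Proof.
  intros B.
  assert (Ca : Cauchy_crit a).
  { intros eps He. destruct (small_inv (eps / 5)) as [M HM]; [lra|]. exists M. intros n m Hn Hm.
    unfold R_dist. pose proof (B n n). pose proof (B m n).
    pose proof (HM n Hn). pose proof (HM m Hm).
    replace (a n - a m) with (- (g n - a n) + (g n - a m)) by ring.
    eapply Rle_lt_trans; [apply Rabs_triang|]. rewrite Rabs_Ropp. lra. }
  destruct (Rcomplete.R_complete a Ca) as [L HL]. exists L. split; [|exact HL].
  intros eps He. destruct (small_inv (eps / 4)) as [M HM]; [lra|]. exists M. intros K HK.
  destruct (HL (eps / 4)) as [M2 HM2]; [lra|].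
  set (N := Nat.max K M2).
  pose proof (B N K). pose proof (HM K HK). pose proof (HM N ltac:(lia)). pose proof (HM2 N ltac:(lia)).
  unfold R_dist in *. replace (g K - L) with ((g K - a N) + (a N - L)) by ring.
  eapply Rle_lt_trans; [apply Rabs_triang|]. lra.
Qed.

Theorem mainTheorem5 :
  (exists S : nat -> nat -> R,
      lower_tri S /\
      (forall i k, lt_mul S Tmat i k = delta i k) /\
      (forall i k, lt_mul Tmat S i k = delta i k)) /\
  (forall S : nat -> nat -> R,
      lower_tri S ->
      (forall i k, lt_mul S Tmat i k = delta i k) ->
      (forall i k, lt_mul Tmat S i k = delta i k) ->
      exists L : R, Un_cv gamma_seq L /\ Un_cv (partial_series S) L).
Proof.
  split.
  - exists S0. apply exists_inv.
  - intros X HL HX _. apply limit_arg. intros N K.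
    rewrite ps_val by auto. rewrite gamma_Ih.
    pose proof (key_bound N K). pose proof (INRS_pos N). pose proof (INRS_pos K).
    rewrite (S_INR K) in *.
    assert (0 < / INR (S N)) by (apply Rinv_0_lt_compat; lra).
    apply Rabs_le. lra.
Qed.
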